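(* Let $m\in\mathbb N$ and let $\mathcal P_m$ be the $1$-dimensional PVAS (transitions and steps only; initial configuration irrelevant) with states $\{\perp,0,1,\dots,m\}$, stack alphabet $\{\gamma_0,\dots,\gamma_m\}$, and transitions: $(\perp,0,\mathrm{pop}(\gamma_0),0)$, $(0,+1,\mathrm{nop},\perp)$, and for each $i\in\{1,\dots,m\}$: $(\perp,0,\mathrm{pop}(\gamma_i),i)$, $(i,+1,\mathrm{push}(\gamma_{i-1}),\perp)$, and $(i,-1,\mathrm{push}(\gamma_{i-1}),i)$. Then for all $n\in\mathbb N$ and $j\in\{0,\dots,m\}$, $$A_j(n)=\max\{c\in\mathbb N\mid (\perp,n,\gamma_j)\xrightarrow{*}(\perp,c,\varepsilon)\},$$ and in particular this maximum exists.
   Context: Ackermann functions $A_j:\mathbb N\to\mathbb N$: $A_0(n)=n+1$ and $A_j(n)=A_{j-1}^{n+1}(1)$ for $j>0$ (the $(n+1)$-fold iterate). For a $1$-dimensional PVAS with transition set $\Delta\subseteq Q\times\mathbb Z\times\mathrm{Op}(\Gamma)\times Q$, configurations are $(q,c,w)\in Q\times\mathbb N\times\Gamma^*$, and $(p,c,u)\to(q,d,v)$ iff some $(p,a,\mathrm{op},q)\in\Delta$ has $d=c+a\ge 0$ and either $\mathrm{op}=\mathrm{push}(\gamma)$, $v=u\gamma$; or $\mathrm{op}=\mathrm{pop}(\gamma)$, $u=v\gamma$; or $\mathrm{op}=\mathrm{nop}$, $u=v$ (the top of the stack is the last letter). $\xrightarrow{*}$ is the reflexive transitive closure; $\varepsilon$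 is the empty word. *)

(* Defs.v *)
From Stdlib Require Import Arith ZArith List Relations.
Import ListNotations.

Fixpoint ack (j : nat) (n : nat) : nat :=
  match j with
  | 0 => S n
  | S j' => Nat.iter (S n) (ack j') 1
  end.

Inductive op (Gamma : Type) : Type :=
  | push : Gamma -> op Gamma
  | pop : Gamma -> op Gamma
  | nop : op Gamma.
Arguments push {Gamma} _.
Arguments pop {Gamma} _.
Arguments nop {Gamma}.

Definition transition (Q Gamma : Type) : Type := (Q * Z * op Gamma * Q)%type.

(* Configurations (q, c, w) ∈ Q × N × Γ^*; the top of the stack is the last letter. *)
Definition config (Q Gamma : Type) : Type := (Q * nat * list Gamma)%type.

Definition op_effect {Gamma : Type} (o : op Gamma) (u v : list Gamma) : Prop :=
  match o with
  | push g => v = u ++ [g]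
  | pop g => u = v ++ [g]
  | nop => u = v
  end.

Definition pvas_step {Q Gamma : Type} (Delta : transition Q Gamma -> Prop)
    (x y : config Q Gamma) : Prop :=
  let '(p, c, u) := x in
  let '(q, d, v) := y in
  exists a o, Delta (p, a, o, q) /\ Z.of_nat d = (Z.of_nat c + a)%Z /\ op_effect o u v.

Definition pvas_reach {Q Gamma : Type} (Delta : transition Q Gamma -> Prop) :
    relation (config Q Gamma) :=
  clos_refl_trans (config Q Gamma) (pvas_step Delta).

(* States {⊥, 0, 1, ..., m}: Bot and St i (only i <= m used). *)
Inductive state : Type := Bot | St (i : nat).

(* Stack alphabet {γ_0,...,γ_m}: γ_i is represented by the natural number i. *)
Definition P_trans (m : nat) (t : transition state nat) : Prop :=
  t = (Bot, 0%Z, pop 0, St 0)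
  \/ t = (St 0, 1%Z, nop, Bot)
  \/ exists i, 1 <= i <= m /\
       (t = (Bot, 0%Z, pop i, St i)
        \/ t = (St i, 1%Z, push (i - 1), Bot)
        \/ t = (St i, (-1)%Z, push (i - 1), St i)).

(* Main.v *)
Require Import Defs.
From Stdlib Require Import Arith ZArith List Relations Lia.
Import ListNotations.

Lemma iter_ge (f : nat -> nat) (Hf : forall y, y < f y) t x : t + x <= Nat.iter t f x.
Proof. induction t; simpl; [lia|]. specialize (Hf (Nat.iter t f x)); lia. Qed.

Lemma iter_mono_x (f : nat -> nat) (Hm : forall x y, x <= y -> f x <= f y) t x y :
  x <= y -> Nat.iter t f x <= Nat.iter t f y.
Proof. intros; induction t; simpl; auto. Qed.

Lemma iter_mono (f : nat -> nat) (Hf : forall y, y < f y)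
  (Hm : forall x y, x <= y -> f x <= f y) t s x y :
  t <= s -> x <= y -> Nat.iter t f x <= Nat.iter s f y.
Proof.
  intros Hts Hxy. induction s.
  - assert (t = 0) by lia; subst; simpl; auto.
  - destruct (Nat.eq_dec t (S s)).
    + subst. apply iter_mono_x; auto.
    + simpl. specialize (IHs ltac:(lia)). specialize (Hf (Nat.iter s f y)). lia.
Qed.

Lemma ack_props i : (forall x, x < ack i x) /\ (forall x y, x <= y -> ack i x <= ack i y).
Proof.
  induction i as [|i [Hg Hm]]; simpl; split; intros; try lia.
  - pose proof (iter_ge (ack i) Hg (S x) 1) as HH; simpl in HH; lia.
  - apply (iter_mono (ack i) Hg Hm (S x) (S y) 1 1); lia.
Qed.

Lemma ack_gt i x : x < ack i x. Proof. apply ack_props. Qed.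
Lemma ack_mono i x y : x <= y -> ack i x <= ack i y. Proof. apply ack_props. Qed.

Lemma ack_step i c : ack (S i) (S c) = ack i (ack (S i) c).
Proof. reflexivity. Qed.

Lemma ack_exit i c : ack i (S c) <= ack (S i) c.
Proof.
  simpl. apply ack_mono. pose proof (iter_ge (ack i) (ack_gt i) c 1). lia.
Qed.

Definition V (w : list nat) (c : nat) : nat := fold_right (fun i acc => ack i acc) c w.

Lemma V_app w i c : V (w ++ [i]) c = V w (ack i c).
Proof. unfold V. rewrite fold_right_app. reflexivity. Qed.

Lemma V_mono w x y : x <= y -> V w x <= V w y.
Proof. induction w; simpl; auto. intros; apply ack_mono; auto. Qed.

Definition Phi (x : config state nat) : nat :=
  match x with
  | (Bot, c, w) => V w c
  | (St i, c, w) => V w (ack i c)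
  end.

Lemma step_dec m x y : pvas_step (P_trans m) x y -> Phi y <= Phi x.
Proof.
  destruct x as [[p c] u], y as [[q d] v]. simpl.
  intros (a & o & Ht & Hz & He).
  destruct Ht as [Ht|[Ht|(i & Hi & [Ht|[Ht|Ht]])]]; injection Ht; intros; subst; simpl in *.
  - subst u. assert (d = c) by lia. subst. rewrite V_app. simpl. lia.
  - subst. assert (d = S c) by lia. subst. simpl. lia.
  - subst u. assert (d = c) by lia. subst. rewrite V_app. lia.
  - subst v. rewrite V_app. assert (d = S c) by lia. subst.
    apply V_mono. destruct i; [lia|]. replace (S i - 1) with i by lia. apply ack_exit.
  - subst v. rewrite V_app. destruct c; [lia|]. assert (d = c) by lia. subst.
    apply V_mono. destruct i; [lia|]. replace (S i - 1) with i by lia.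
    rewrite ack_step. lia.
Qed.

Lemma reach_dec m x y : pvas_reach (P_trans m) x y -> Phi y <= Phi x.
Proof.
  induction 1; auto. eapply step_dec; eauto. lia.
Qed.

Lemma loop m i (Hi : 1 <= i <= m) k c w :
  pvas_reach (P_trans m) (St i, k + c, w) (St i, c, w ++ repeat (i - 1) k).
Proof.
  revert w. induction k; intros w.
  - rewrite app_nil_r. apply rt_refl.
  - eapply rt_trans; [apply rt_step|].
    + instantiate (1 := (St i, k + c, w ++ [i - 1])).
      exists (-1)%Z, (push (i - 1)). split; [|split].
      * right; right. exists i. split; [exact Hi|right; right; reflexivity].
      * lia.
      * reflexivity.
    + replace (w ++ repeat (i - 1) (S k)) with ((w ++ [i - 1]) ++ repeat (i - 1) k).
      * apply IHk.
      * rewrite <- app_assoc. reflexivity.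
Qed.

Lemma reach_ack m j : j <= m -> forall n w,
  pvas_reach (P_trans m) (Bot, n, w ++ [j]) (Bot, ack j n, w).
Proof.
  induction j as [|j IH]; intros Hj n w.
  - eapply rt_trans; apply rt_step.
    + instantiate (1 := (St 0, n, w)). simpl. exists 0%Z, (pop 0).
      split; [left; reflexivity|split; [lia|reflexivity]].
    + simpl. exists 1%Z, nop. split; [right; left; reflexivity|split; [lia|reflexivity]].
  - assert (Hi : 1 <= S j <= m) by lia.
    assert (Hrep : forall k x, pvas_reach (P_trans m) (Bot, x, w ++ repeat j k)
                                 (Bot, Nat.iter k (ack j) x, w)).
    { induction k; intros x.
      - simpl. rewrite app_nil_r. apply rt_refl.
      - eapply rt_trans.
        + replace (w ++ repeat j (S k)) with ((w ++ repeat j k) ++ [j]).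
          * apply IH; lia.
          * rewrite <- app_assoc. simpl. f_equal. clear. induction k; simpl; congruence.
        + rewrite Nat.iter_succ_r. apply IHk. }
    eapply rt_trans; [apply rt_step|].
    { instantiate (1 := (St (S j), n, w)). simpl. exists 0%Z, (pop (S j)).
      split; [right; right; exists (S j); split; auto|split; [lia|reflexivity]]. }
    eapply rt_trans.
    { pose proof (loop m (S j) Hi n 0 w) as L. rewrite Nat.add_0_r in L. exact L. }
    eapply rt_trans; [apply rt_step|].
    { instantiate (1 := (Bot, 1, w ++ repeat j (S n))). simpl. exists 1%Z, (push j).
      split; [right; right; exists (S j); split; auto; right; left; simpl;
              rewrite Nat.sub_0_r; reflexivity|split; [lia|]].
      simpl. rewrite Nat.sub_0_r. rewrite <- app_assoc. f_equal.
      clear. induction n; simpl; congruence. }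
    apply Hrep.
Qed.

Theorem mainTheorem4 (m n j : nat) (hj : j <= m) :
  pvas_reach (P_trans m) (Bot, n, [j]) (Bot, ack j n, [])
  /\ (forall c : nat, pvas_reach (P_trans m) (Bot, n, [j]) (Bot, c, []) -> c <= ack j n).
Proof.
  split.
  - apply (reach_ack m j hj n []).
  - intros c H. apply reach_dec in H. simpl in H. exact H.
Qed.
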